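(* For non-negative integers $p_1,p_2$, a positive integer $r$, integers $k_1,k_2$ and $x_1,x_2\in\mathbb{C}$, $$\sum_{j_1=0}^{p_1}\sum_{j_2=0}^{p_2}\binom{p_1}{j_1}\binom{p_2}{j_2}\left(B^{(k_1)}_{p_1-j_1}(x_1+r)B^{(k_2)}_{p_2-j_2}(x_2+r)-B^{(k_1)}_{p_1-j_1}(x_1)B^{(k_2)}_{p_2-j_2}(x_2)\right)B_{j_1+j_2}$$ $$=\sum_{j_1=0}^{p_1}\sum_{j_2=0}^{p_2}\binom{p_1}{j_1}\binom{p_2}{j_2}B^{(k_1)}_{p_1-j_1}(x_1)B^{(k_2)}_{p_2-j_2}(x_2)\left(B_{j_1+j_2}(r)-B_{j_1+j_2}\right)$$ $$=p_1\sum_{t=0}^{r-1}B^{(k_1)}_{p_1-1}(x_1+t)B^{(k_2)}_{p_2}(x_2+t)+p_2\sum_{t=0}^{r-1}B^{(k_1)}_{p_1}(x_1+t)B^{(k_2)}_{p_2-1}(x_2+t),$$ where the term with $p_i$ as factor is interpreted as $0$ when $p_i=0$.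
   Context: For an integer $k$, a non-negative integer $n$ and $x\in\mathbb{C}$, the poly-Bernoulli polynomial is $B_{n}^{(k)}(x)=\sum_{l=0}^{n}\frac{1}{(l+1)^{k}}\sum_{j=0}^{l}(-1)^{j}\binom{l}{j}(j+x)^{n}$. $B_n(x)$ are the Bernoulli polynomials, $\frac{te^{xt}}{e^t-1}=\sum_{n\ge0}B_n(x)\frac{t^n}{n!}$, and $B_n=B_n(0)$ the Bernoulli numbers (so $B_1=-1/2$). *)

(* Defs.v *)
From HB Require Import structures.
From mathcomp Require Import all_boot all_order all_algebra.
From mathcomp Require Import complex.
From mathcomp Require Import reals.
Set Implicit Arguments. Unset Strict Implicit. Unset Printing Implicit Defensive.
Import Order.TTheory GRing.Theory Num.Theory.
Local Open Scope ring_scope.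

(* Bernoulli numbers B_0, B_1, ... (convention B_1 = -1/2), i.e. the coefficients
   of t/(e^t - 1), characterized by B_0 = 1 and
   sum_{k=0}^{n} C(n+1,k) B_k = 0 for n >= 1.
   bern_seq n is the list [:: B_0; ...; B_n]. *)
Fixpoint bern_seq (F : fieldType) (n : nat) : seq F :=
  match n with
  | 0 => [:: 1]
  | m.+1 => let s := bern_seq F m in
      rcons s (- (m.+2)%:R^-1 * \sum_(k < m.+2) ('C(m.+2, k))%:R * s`_k)
  end.

Definition bernoulli (F : fieldType) (n : nat) : F := (bern_seq F n)`_n.

(* Bernoulli polynomial B_n(x) = sum_k C(n,k) B_k x^(n-k), equivalently
   t e^{xt}/(e^t-1) = sum_n B_n(x) t^n/n!. *)
Definition bernoulli_poly (F : fieldType) (n : nat) (x : F) : F :=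
  \sum_(k < n.+1) ('C(n, k))%:R * bernoulli F k * x ^+ (n - k).

Definition poly_bernoulli (F : fieldType) (k : int) (n : nat) (x : F) : F :=
  \sum_(l < n.+1) (((l.+1)%:R : F) ^ k)^-1 *
    \sum_(j < l.+1) (-1) ^+ j * ('C(l, j))%:R * (j%:R + x) ^+ n.

(* Main.v *)
Require Import Defs.
From HB Require Import structures.
From mathcomp Require Import all_boot all_order all_algebra.
From mathcomp Require Import complex reals.
From mathcomp Require Import ring zify.
Set Implicit Arguments. Unset Strict Implicit. Unset Printing Implicit Defensive.
Import Order.TTheory GRing.Theory Num.Theory.
Local Open Scope ring_scope.

Section Gen.
Variable F : numFieldType.

Lemma pascal_sum (h : nat -> F) m :
  \sum_(j < m.+2) ('C(m.+1, j))%:R * h j =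
  \sum_(j < m.+1) ('C(m, j))%:R * h j + \sum_(j < m.+1) ('C(m, j))%:R * h j.+1.
Proof.
rewrite big_ord_recl [in RHS]big_ord_recl /= !bin0.
have -> : \sum_(i < m.+1) ('C(m.+1, lift ord0 i))%:R * h (lift ord0 i)
  = \sum_(i < m.+1) ('C(m, i.+1))%:R * h i.+1 + \sum_(i < m.+1) ('C(m, i))%:R * h i.+1.
  by rewrite -big_split /=; apply: eq_bigr => i _; rewrite /bump /= add1n binS natrD mulrDl.
rewrite [\sum_(i < m.+1) ('C(m, i.+1))%:R * h i.+1]big_ord_recr /= bin_small // mul0r addr0.
by rewrite addrA.
Qed.

Lemma vander (h : nat -> F) m1 m2 :
  \sum_(j1 < m1.+1) \sum_(j2 < m2.+1) ('C(m1, j1))%:R * ('C(m2, j2))%:R * h (j1 + j2)%N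
  = \sum_(n < (m1 + m2).+1) ('C(m1 + m2, n))%:R * h n.
Proof.
elim: m2 h => [|m2 IH] h.
  rewrite addn0; apply: eq_bigr => j _; rewrite big_ord1 bin0 mulr1 addn0 //.
have E : forall j1 : 'I_m1.+1, \sum_(j2 < m2.+2) ('C(m1, j1))%:R * ('C(m2.+1, j2))%:R * h (j1 + j2)%N
  = \sum_(j2 < m2.+1) ('C(m1, j1))%:R * ('C(m2, j2))%:R * h (j1 + j2)%N
  + \sum_(j2 < m2.+1) ('C(m1, j1))%:R * ('C(m2, j2))%:R * h (j1 + j2).+1%N.
  move=> j1.
  rewrite (eq_bigr (fun j2 : 'I_m2.+2 => ('C(m2.+1, j2))%:R * (('C(m1, j1))%:R * h (j1 + j2)%N))); last by move=> i _; ring.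
  rewrite (pascal_sum (fun j => ('C(m1, j1))%:R * h (j1 + j)%N) m2).
  by congr (_ + _); apply: eq_bigr => i _; rewrite ?addnS; ring.
rewrite (eq_bigr _ (fun j1 _ => E j1)) big_split /= IH.
rewrite (IH (fun n => h n.+1)) addnS pascal_sum //.
Qed.

Lemma tri (G : nat -> nat -> F) p :
  \sum_(j < p.+1) \sum_(i < (p - j)%N.+1) G j i = \sum_(m < p.+1) \sum_(j < m.+1) G j (m - j)%N.
Proof.
elim: p G => [|p IH] G.
  by rewrite !big_ord1.
rewrite big_ord_recl /= subn0.
rewrite (eq_bigr (fun j : 'I_p.+1 => \sum_(i < (p - j)%N.+1) G j.+1 i)); last first.
  by move=> j _; rewrite /bump /= add1n subSS.
rewrite (IH (fun j i => G j.+1 i)).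
rewrite [in RHS](eq_bigr (fun m : 'I_p.+2 => G 0%N m + \sum_(j < m) G j.+1 (m - j.+1)%N)) ; last first.
  by move=> m _; rewrite big_ord_recl subn0.
rewrite big_split /=; congr (_ + _).
rewrite [in RHS]big_ord_recl /= big_ord0 add0r; apply: eq_bigr => m _.
by apply: eq_bigr => j _.
Qed.

Lemma binC3 p m j : (j <= m)%N -> (m <= p)%N ->
  ('C(p, j) * 'C(p - j, m - j) = 'C(p, m) * 'C(m, j))%N.
Proof.
move=> jm mp.
have P : (0 < j`! * (m - j)`! * (p - m)`!)%N by rewrite !muln_gt0 !fact_gt0.
apply/eqP; rewrite -(eqn_pmul2r P); apply/eqP.
have e1 : ('C(p, j) * 'C(p - j, m - j) * (j`! * (m - j)`! * (p - m)`!))%N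
   = ('C(p, j) * j`! * ('C(p - j, m - j) * ((m - j)`! * (p - j - (m - j))`!)))%N.
  have -> : (p - j - (m - j) = p - m)%N by lia.
  by rewrite !mulnA; congr (_ * _); rewrite -!mulnA; congr (_ * _); rewrite mulnC -!mulnA; congr (_ * _); rewrite mulnC.
rewrite e1 bin_fact; last by lia.
have e2 : ('C(p, m) * 'C(m, j) * (j`! * (m - j)`! * (p - m)`!))%N
   = ('C(p, m) * ('C(m, j) * (j`! * (m - j)`!)) * (p - m)`!)%N.
  by rewrite !mulnA.
rewrite e2 bin_fact // -mulnA bin_fact //.
rewrite -mulnA bin_fact //.
exact: leq_trans jm mp.
Qed.

Lemma conv_assoc (a Q c : nat -> F) p :
  \sum_(j < p.+1) ('C(p, j))%:R * (\sum_(i < (p - j)%N.+1) ('C(p - j, i))%:R * a (p - j - i)%N * Q i) * c j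
  = \sum_(m < p.+1) ('C(p, m))%:R * a (p - m)%N * (\sum_(j < m.+1) ('C(m, j))%:R * Q (m - j)%N * c j).
Proof.
pose G := fun j i => ('C(p, j))%:R * ('C(p - j, i))%:R * a (p - j - i)%N * Q i * c j.
transitivity (\sum_(j < p.+1) \sum_(i < (p - j)%N.+1) G j i).
  apply: eq_bigr => j _; rewrite mulr_sumr mulr_suml; apply: eq_bigr => i _; rewrite /G; ring.
rewrite tri; apply: eq_bigr => m _; rewrite mulr_sumr; apply: eq_bigr => j _.
rewrite /G.
have jm : (j <= m)%N by rewrite -ltnS.
have mp : (m <= p)%N by rewrite -ltnS.
have -> : (p - j - (m - j) = p - m)%N by lia.
have -> : ('C(p, j))%:R * ('C(p - j, m - j))%:R = ('C(p, m))%:R * ('C(m, j))%:R :> F.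
  by rewrite -!natrM binC3.
ring.
Qed.
End Gen.

Section Bern.
Variable F : numFieldType.
Local Notation B := (@bernoulli F).

Lemma size_bern n : size (bern_seq F n) = n.+1.
Proof. by elim: n => //= n IH; rewrite size_rcons IH. Qed.

Lemma bern_nth n k : (k <= n)%N -> (bern_seq F n)`_k = B k.
Proof.
elim: n => [|n IH]; first by rewrite leqn0 => /eqP ->.
rewrite leq_eqVlt => /orP [/eqP -> //|]; rewrite ltnS => kn.
by rewrite /= nth_rcons size_bern ltnS kn IH.
Qed.

Lemma bern_sum n : \sum_(k < n.+1) ('C(n, k))%:R * B k = B n + (n == 1%N)%:R.
Proof.
case: n => [|[|m]].
- by rewrite big_ord1 bin0 mul1r addr0.
- by rewrite !big_ord_recr big_ord0 /= add0r !bin1 bin0 !mul1r addrC.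
rewrite big_ord_recr /= binn mul1r addr0.
suff -> : \sum_(i < m.+2) ('C(m.+2, i))%:R * B i = 0 by rewrite add0r.
have HB : B m.+1 = - (m.+2)%:R^-1 * \sum_(k < m.+1) ('C(m.+2, k))%:R * B k.
  rewrite {1}/bernoulli /= nth_rcons size_bern ltnn eqxx; congr (_ * _).
  rewrite big_ord_recr /= nth_default ?size_bern // mulr0 addr0.
  by apply: eq_bigr => k _; rewrite bern_nth // -ltnS.
rewrite big_ord_recr /= HB binSn mulrA mulrN mulfV ?pnatr_eq0 //.
by rewrite mulN1r addrN.
Qed.

Local Notation Bp := (@bernoulli_poly F).

Lemma Bp_shift m x : Bp m (x + 1) = Bp m x + m%:R * x ^+ m.-1.
Proof.
rewrite /bernoulli_poly.
transitivity (\sum_(k < m.+1) ('C(m, k))%:R *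
   (\sum_(i < (m - k)%N.+1) ('C(m - k, i))%:R * x ^+ (m - k - i)%N * (fun _ => 1) i) * B k).
  apply: eq_bigr => k _; rewrite exprDn mulrAC; congr (_ * _); congr (_ * _).
  by apply: eq_bigr => i _; rewrite expr1n !mulr1 mulr_natl.
rewrite (conv_assoc (fun n => x ^+ n) (fun _ => 1) (fun k => B k) m).
transitivity (\sum_(i < m.+1) ('C(m, i))%:R * x ^+ (m - i) * (B i + (i == 1 :> nat)%:R)).
  apply: eq_bigr => i _; rewrite -bern_sum; congr (_ * _); apply: eq_bigr => j _; ring.
rewrite (eq_bigr (fun i : 'I_m.+1 => ('C(m, i))%:R * B i * x ^+ (m - i) +
    ('C(m, i))%:R * x ^+ (m - i) * (i == 1 :> nat)%:R)); last by move=> i _; ring.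
rewrite big_split /=; congr (_ + _).
case: m => [|n]; first by rewrite big_ord1 mulr0 mul0r.
rewrite big_ord_recl big_ord_recl /= big1 ?addr0; last first.
  by move=> i _; rewrite /bump /= mulr0.
by rewrite mulr0 add0r bin1 subn1 mulr1 mulrC.
Qed.

Lemma Bp0 m : Bp m 0 = B m.
Proof.
rewrite /bernoulli_poly big_ord_recr /= subnn expr0 mulr1 binn mul1r big1 ?add0r //.
by move=> i _; rewrite expr0n subn_eq0 leqNgt ltn_ord /= mulr0.
Qed.

Lemma Bp_nat m r : Bp m r%:R - B m = \sum_(t < r) m%:R * t%:R ^+ m.-1.
Proof.
elim: r => [|r IH]; first by rewrite big_ord0 Bp0 subrr.
rewrite big_ord_recr /= -IH -natr1 Bp_shift; ring.
Qed.
End Bern.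

Section PBS.
Variable F : numFieldType.

Definition Dd (l m : nat) (x : F) :=
  \sum_(j < l.+1) (-1) ^+ j * ('C(l, j))%:R * (j%:R + x) ^+ m.

Lemma D_shift l m x y :
  Dd l m (x + y) = \sum_(i < m.+1) ('C(m, i))%:R * Dd l (m - i) x * y ^+ i.
Proof.
rewrite /Dd.
transitivity (\sum_(j < l.+1) \sum_(i < m.+1)
   ('C(m, i))%:R * ((-1) ^+ j * ('C(l, j))%:R * (j%:R + x) ^+ (m - i)) * y ^+ i).
  apply: eq_bigr => j _; rewrite addrA exprDn mulr_sumr; apply: eq_bigr => i _.
  rewrite -mulr_natl; ring.
rewrite exchange_big /=; apply: eq_bigr => i _.
by rewrite mulr_sumr mulr_suml.
Qed.

Lemma D_zero l m x : (m < l)%N -> Dd l m x = 0.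
Proof.
elim: l m x => [//|l IH] m x ml.
have E : Dd l.+1 m x = Dd l m x - Dd l m (x + 1).
  rewrite /Dd.
  rewrite (eq_bigr (fun j : 'I_l.+2 => ('C(l.+1, j))%:R * ((-1) ^+ j * (j%:R + x) ^+ m))); last by move=> j _; ring.
  rewrite (pascal_sum (fun j => (-1) ^+ j * (j%:R + x) ^+ m)).
  rewrite -sumrN; congr (_ + _); apply: eq_bigr => j _; first ring.
  rewrite -natr1 exprS -(addrA _ 1 x) (addrC 1 x); ring.
rewrite E D_shift big_ord_recl /= subn0 bin0 expr0 mulr1 mul1r big1 ?addr0 ?subrr //.
move=> i _; rewrite IH ?mulr0 ?mul0r //.
have := ltn_ord i; rewrite /bump /=; lia.
Qed.

Lemma sum_ext0 (f : nat -> F) n N : (n <= N)%N -> (forall l, (n < l)%N -> f l = 0) ->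
  \sum_(l < N.+1) f l = \sum_(l < n.+1) f l.
Proof.
move=> nN H; rewrite [RHS](big_ord_widen N.+1 f) ?ltnS // [RHS]big_mkcond.
apply: eq_bigr => l _; case: ifP => // /negbT; rewrite ltnNge negbK => /H ->//.
Qed.

Lemma PB_D k n (x : F) : poly_bernoulli k n x = \sum_(l < n.+1) (((l.+1)%:R : F) ^ k)^-1 * Dd l n x.
Proof. by []. Qed.

Lemma PB_shift k n (x y : F) :
  poly_bernoulli k n (x + y) = \sum_(i < n.+1) ('C(n, i))%:R * poly_bernoulli k (n - i) x * y ^+ i.
Proof.
rewrite PB_D.
transitivity (\sum_(l < n.+1) \sum_(i < n.+1) ('C(n, i))%:R * y ^+ i *
   ((((l.+1)%:R : F) ^ k)^-1 * Dd l (n - i) x)).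
  apply: eq_bigr => l _; rewrite D_shift mulr_sumr; apply: eq_bigr => i _; ring.
rewrite exchange_big /=; apply: eq_bigr => i _.
rewrite -mulr_sumr PB_D (sum_ext0 (f := fun l => (((l.+1)%:R : F) ^ k)^-1 * Dd l (n - i) x) (leq_subr i n)).
  by rewrite mulrAC.
by move=> l hl; rewrite D_zero ?mulr0.
Qed.
End PBS.

Section Main.
Variable F : numFieldType.
Local Notation B := (@bernoulli F).
Local Notation Bp := (@bernoulli_poly F).

Lemma inner_vander (y : F) m1 m2 :
  \sum_(j2 < m2.+1) ('C(m2, j2))%:R * y ^+ (m2 - j2) *
     (\sum_(j1 < m1.+1) ('C(m1, j1))%:R * y ^+ (m1 - j1) * B (j1 + j2)%N)
  = Bp (m1 + m2)%N y.
Proof.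
have V := vander (fun n => B n * y ^+ (m1 + m2 - n)) m1 m2; cbv beta in V.
rewrite /bernoulli_poly.
transitivity (\sum_(n < (m1 + m2).+1) ('C(m1 + m2, n))%:R * (B n * y ^+ (m1 + m2 - n))); last first.
  by apply: eq_bigr => n _; rewrite mulrA.
rewrite -V.
rewrite [RHS]exchange_big /=; apply: eq_bigr => j2 _; rewrite mulr_sumr; apply: eq_bigr => j1 _.
have h1 : (j1 <= m1)%N by rewrite -ltnS.
have h2 : (j2 <= m2)%N by rewrite -ltnS.
have -> : (m1 + m2 - (j1 + j2) = (m1 - j1) + (m2 - j2))%N by lia.
rewrite exprD; ring.
Qed.

Lemma part1 (a b : nat -> F) (y : F) p1 p2 :
  \sum_(j1 < p1.+1) \sum_(j2 < p2.+1) ('C(p1, j1))%:R * ('C(p2, j2))%:R *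
     (\sum_(i < (p1 - j1)%N.+1) ('C(p1 - j1, i))%:R * a (p1 - j1 - i)%N * y ^+ i) *
     (\sum_(i < (p2 - j2)%N.+1) ('C(p2 - j2, i))%:R * b (p2 - j2 - i)%N * y ^+ i) * B (j1 + j2)%N
  = \sum_(j1 < p1.+1) \sum_(j2 < p2.+1) ('C(p1, j1))%:R * ('C(p2, j2))%:R *
     a (p1 - j1)%N * b (p2 - j2)%N * Bp (j1 + j2)%N y.
Proof.
pose b' n := \sum_(i < n.+1) ('C(n, i))%:R * b (n - i)%N * y ^+ i.
pose c j1 := \sum_(j2 < p2.+1) ('C(p2, j2))%:R * b' (p2 - j2)%N * B (j1 + j2)%N.
transitivity (\sum_(j1 < p1.+1) ('C(p1, j1))%:R *
   (\sum_(i < (p1 - j1)%N.+1) ('C(p1 - j1, i))%:R * a (p1 - j1 - i)%N * (fun i => y ^+ i) i) * c j1).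
  apply: eq_bigr => j1 _; rewrite /c mulr_sumr; apply: eq_bigr => j2 _; rewrite /b'; ring.
rewrite (conv_assoc a (fun i => y ^+ i) c p1).
apply: eq_bigr => m1 _.
pose d j2 := \sum_(j1 < m1.+1) ('C(m1, j1))%:R * y ^+ (m1 - j1) * B (j1 + j2)%N.
transitivity (('C(p1, m1))%:R * a (p1 - m1)%N *
  \sum_(j2 < p2.+1) ('C(p2, j2))%:R *
   (\sum_(i < (p2 - j2)%N.+1) ('C(p2 - j2, i))%:R * b (p2 - j2 - i)%N * (fun i => y ^+ i) i) * d j2).
  congr (_ * _); rewrite /c /d.
  transitivity (\sum_(j1 < m1.+1) \sum_(j2 < p2.+1)
     ('C(p2, j2))%:R * b' (p2 - j2)%N * (('C(m1, j1))%:R * y ^+ (m1 - j1) * B (j1 + j2)%N)).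
    by apply: eq_bigr => j1 _; rewrite mulr_sumr; apply: eq_bigr => j2 _; ring.
  rewrite exchange_big /=; apply: eq_bigr => j2 _.
  by rewrite -mulr_sumr /b'.
have CA := conv_assoc b (fun i => y ^+ i) d p2; cbv beta in CA.
rewrite CA mulr_sumr; apply: eq_bigr => m2 _.
rewrite /d inner_vander; ring.
Qed.

Lemma split_pow (t : F) (j1 j2 : nat) :
  (j1 + j2)%:R * t ^+ (j1 + j2).-1 = j1%:R * t ^+ j1.-1 * t ^+ j2 + j2%:R * t ^+ j1 * t ^+ j2.-1.
Proof.
case: j1 => [|j1]; first by rewrite !mul0r add0r add0n expr0 mulr1.
case: j2 => [|j2]; first by rewrite addn0 !mul0r addr0 expr0 mulr1.
rewrite addSn addnS /= !exprS exprD -!natr1 natrD; ring.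
Qed.

Lemma dsum (a : nat -> F) (t : F) p :
  \sum_(j < p.+1) ('C(p, j))%:R * a (p - j)%N * (j%:R * t ^+ j.-1)
  = p%:R * \sum_(i < p.-1.+1) ('C(p.-1, i))%:R * a (p.-1 - i)%N * t ^+ i.
Proof.
case: p => [|q]; first by rewrite !big_ord1 !mul0r mulr0.
rewrite big_ord_recl /= mul0r mulr0 add0r mulr_sumr; apply: eq_bigr => i _.
rewrite /bump /= add1n subSS /=.
have -> : ('C(q.+1, i.+1))%:R * a (q - i)%N * (i.+1%:R * t ^+ i)
   = (i.+1 * 'C(q.+1, i.+1))%N%:R * a (q - i)%N * t ^+ i :> F by rewrite natrM; ring.
rewrite -mul_bin_diag natrM /=; ring.
Qed.

Lemma part2_t (a b : nat -> F) (t : F) p1 p2 :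
  \sum_(j1 < p1.+1) \sum_(j2 < p2.+1) ('C(p1, j1))%:R * ('C(p2, j2))%:R *
     a (p1 - j1)%N * b (p2 - j2)%N * ((j1 + j2)%N%:R * t ^+ (j1 + j2)%N.-1)
  = p1%:R * (\sum_(i < p1.-1.+1) ('C(p1.-1, i))%:R * a (p1.-1 - i)%N * t ^+ i)
          * (\sum_(i < p2.+1) ('C(p2, i))%:R * b (p2 - i)%N * t ^+ i)
  + p2%:R * (\sum_(i < p1.+1) ('C(p1, i))%:R * a (p1 - i)%N * t ^+ i)
          * (\sum_(i < p2.-1.+1) ('C(p2.-1, i))%:R * b (p2.-1 - i)%N * t ^+ i).
Proof.
transitivity ((\sum_(j < p1.+1) ('C(p1, j))%:R * a (p1 - j)%N * (j%:R * t ^+ j.-1)) *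
    (\sum_(i < p2.+1) ('C(p2, i))%:R * b (p2 - i)%N * t ^+ i) +
    (\sum_(i < p1.+1) ('C(p1, i))%:R * a (p1 - i)%N * t ^+ i) *
    (\sum_(j < p2.+1) ('C(p2, j))%:R * b (p2 - j)%N * (j%:R * t ^+ j.-1))); last first.
  by rewrite !dsum; ring.
rewrite !mulr_suml -big_split /=.
apply: eq_bigr => j1 _; rewrite !mulr_sumr -big_split /=.
apply: eq_bigr => j2 _; rewrite split_pow; ring.
Qed.
End Main.

Theorem gen_main (F : numFieldType) (p1 p2 r : nat) (k1 k2 : int) (x1 x2 : F) :
  let PB := @poly_bernoulli F in
  let B := @bernoulli F in
  let Bp := @bernoulli_poly F in
  \sum_(j1 < p1.+1) \sum_(j2 < p2.+1)
     ('C(p1, j1))%:R * ('C(p2, j2))%:R *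
     (PB k1 (p1 - j1)%N (x1 + r%:R) * PB k2 (p2 - j2)%N (x2 + r%:R)
      - PB k1 (p1 - j1)%N x1 * PB k2 (p2 - j2)%N x2) * B (j1 + j2)%N
  = \sum_(j1 < p1.+1) \sum_(j2 < p2.+1)
     ('C(p1, j1))%:R * ('C(p2, j2))%:R *
     PB k1 (p1 - j1)%N x1 * PB k2 (p2 - j2)%N x2 *
     (Bp (j1 + j2)%N r%:R - B (j1 + j2)%N)
  /\
  \sum_(j1 < p1.+1) \sum_(j2 < p2.+1)
     ('C(p1, j1))%:R * ('C(p2, j2))%:R *
     PB k1 (p1 - j1)%N x1 * PB k2 (p2 - j2)%N x2 *
     (Bp (j1 + j2)%N r%:R - B (j1 + j2)%N)
  = p1%:R * \sum_(t < r) PB k1 p1.-1 (x1 + t%:R) * PB k2 p2 (x2 + t%:R)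
    + p2%:R * \sum_(t < r) PB k1 p1 (x1 + t%:R) * PB k2 p2.-1 (x2 + t%:R).
Proof.
move=> PB B Bp; rewrite /PB /B /Bp.
pose a n := poly_bernoulli k1 n x1.
pose b n := poly_bernoulli k2 n x2.
split.
  have P1 := part1 a b r%:R p1 p2.
  transitivity (\sum_(j1 < p1.+1) \sum_(j2 < p2.+1) ('C(p1, j1))%:R * ('C(p2, j2))%:R *
     (\sum_(i < (p1 - j1)%N.+1) ('C(p1 - j1, i))%:R * a (p1 - j1 - i)%N * r%:R ^+ i) *
     (\sum_(i < (p2 - j2)%N.+1) ('C(p2 - j2, i))%:R * b (p2 - j2 - i)%N * r%:R ^+ i) * bernoulli F (j1 + j2)
     - \sum_(j1 < p1.+1) \sum_(j2 < p2.+1) ('C(p1, j1))%:R * ('C(p2, j2))%:R *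
     poly_bernoulli k1 (p1 - j1) x1 * poly_bernoulli k2 (p2 - j2) x2 * bernoulli F (j1 + j2)).
    rewrite -sumrB; apply: eq_bigr => j1 _; rewrite -sumrB; apply: eq_bigr => j2 _.
    by rewrite !PB_shift /a /b /= mulrBr mulrBl !mulrA.
  rewrite P1 -sumrB; apply: eq_bigr => j1 _; rewrite -sumrB; apply: eq_bigr => j2 _.
  by rewrite /a /b /= mulrBr.
transitivity (\sum_(t < r) \sum_(j1 < p1.+1) \sum_(j2 < p2.+1) ('C(p1, j1))%:R * ('C(p2, j2))%:R *
     a (p1 - j1)%N * b (p2 - j2)%N * ((j1 + j2)%N%:R * t%:R ^+ (j1 + j2)%N.-1)).
  rewrite [RHS]exchange_big /=; apply: eq_bigr => j1 _.
  rewrite [RHS]exchange_big /=; apply: eq_bigr => j2 _.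
  by rewrite Bp_nat mulr_sumr.
rewrite !mulr_sumr -big_split /=; apply: eq_bigr => t _.
rewrite (part2_t a b t%:R p1 p2) /a /b !PB_shift; ring.
Qed.

Theorem mainTheorem13 (R : realType) (p1 p2 r : nat) (k1 k2 : int)
    (x1 x2 : R[i]) (hr : (0 < r)%N) :
  let PB := @poly_bernoulli R[i] in
  let B := @bernoulli R[i] in
  let Bp := @bernoulli_poly R[i] in
  \sum_(j1 < p1.+1) \sum_(j2 < p2.+1)
     ('C(p1, j1))%:R * ('C(p2, j2))%:R *
     (PB k1 (p1 - j1)%N (x1 + r%:R) * PB k2 (p2 - j2)%N (x2 + r%:R)
      - PB k1 (p1 - j1)%N x1 * PB k2 (p2 - j2)%N x2) * B (j1 + j2)%N
  = \sum_(j1 < p1.+1) \sum_(j2 < p2.+1)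
     ('C(p1, j1))%:R * ('C(p2, j2))%:R *
     PB k1 (p1 - j1)%N x1 * PB k2 (p2 - j2)%N x2 *
     (Bp (j1 + j2)%N r%:R - B (j1 + j2)%N)
  /\
  \sum_(j1 < p1.+1) \sum_(j2 < p2.+1)
     ('C(p1, j1))%:R * ('C(p2, j2))%:R *
     PB k1 (p1 - j1)%N x1 * PB k2 (p2 - j2)%N x2 *
     (Bp (j1 + j2)%N r%:R - B (j1 + j2)%N)
  = p1%:R * \sum_(t < r) PB k1 p1.-1 (x1 + t%:R) * PB k2 p2 (x2 + t%:R)
    + p2%:R * \sum_(t < r) PB k1 p1 (x1 + t%:R) * PB k2 p2.-1 (x2 + t%:R).
Proof. exact: gen_main. Qed.
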